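(* Let $q_1,\dots,q_\ell$ be as in the context and let $r_0\in(0,1)$ be such that for all $i,j$ with $\deg q_i>\deg q_j$ and all sufficiently large $N$, $\min_{N^{r_0}\le n,m\le N}\big(q_i(n,N)-q_j(m,N)\big)\ge N$. Then there exist constants $r_1\in(0,1)$, $c>0$, $A,B>0$, sets $B_N\supset[1,N^{r_0}]\cap\mathbb N$ with $|B_N|\le AN^{r_1}$, and, for each permutation $\varepsilon$ of $\{1,\dots,\ell\}$, finitely many numbers $0\le a_{j,\varepsilon}<b_{j,\varepsilon}\le1$ ($j=1,\dots,l_\varepsilon$), with the intervals $(a_{j,\varepsilon},b_{j,\varepsilon})$ pairwise disjoint over all $(j,\varepsilon)$, such that the sets $$I_\varepsilon(N)=\bigcup_{j=1}^{l_\varepsilon}\big(a_{j,\varepsilon}N+BN^{r_1},\,b_{j,\varepsilon}N-N^{r_1}\big)\cap\mathbb N$$ are pairwise disjoint, their union covers $([1,N]\cap\mathbb N)\setminus B_N$, and for all sufficiently large $N$ and all $n\in I_\varepsilon(N)$ with $n\ge N^{r_0}$: $$q_{\varepsilon(1)}(n,N)<q_{\varepsilon(2)}(n,N)<\dots<q_{\varepsilon(\ell)}(n,N),$$ and whenever $q_{\varepsilon(i)}$ and $q_{\varepsilon(i+1)}$ have the same degree and this degree is $>1$, $q_{\varepsilon(i+1)}(n,N)\ge q_{\varepsilon(i)}(n,N)+cN^{1/2}$.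
   Context: $q_1,\dots,q_\ell$ are polynomials in two variables $(n,N)$ with nonnegative integer coefficients, none of which depends only on $N$; the degree of a bivariate polynomial $p(x,y)$ is the degree of $p(x,x)$; $\deg q_i\le\deg q_{i+1}$; for $i\ne j$ the difference $q_i-q_j$ is not constant; each linear $q_i$ has the form $q_i(n,N)=a_in+b_iN$ with integers $a_i,b_i$. *)

(* Defs.v *)
From Stdlib Require Import Reals Arith List Permutation.
Open Scope R_scope.

(* A bivariate polynomial in (n, N) with nonnegative integer coefficients,
   given as a finite list of monomials (c, i, j) standing for c * n^i * N^j. *)
Definition bpoly := list (nat * nat * nat).

Definition beval (q : bpoly) (n N : nat) : nat :=
  fold_right (fun m acc => match m with (c, i, j) => (c * n ^ i * N ^ j + acc)%nat end)
             0%nat q.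

Definition bcoef (q : bpoly) (i j : nat) : nat :=
  fold_right (fun m acc => match m with (c, i', j') =>
      if (Nat.eqb i i' && Nat.eqb j j')%bool then (c + acc)%nat else acc end)
    0%nat q.

(* degree of q(x,x): since coefficients are nonnegative there is no
   cancellation, so this is the max of i+j over monomials with c > 0 *)
Definition bdeg (q : bpoly) : nat :=
  fold_right (fun m acc => match m with (c, i, j) =>
      if Nat.eqb c 0 then acc else Nat.max (i + j) acc end) 0%nat q.

Definition depends_only_on_N (q : bpoly) : Prop :=
  forall i j, bcoef q i j <> 0%nat -> i = 0%nat.

Definition diff_constant (q q' : bpoly) : Prop :=
  forall i j, (i, j) <> (0%nat, 0%nat) -> bcoef q i j = bcoef q' i j.

(* p is a permutation of {0,...,l-1}, written as the list [p(0); ...; p(l-1)] *)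
Definition is_perm (l : nat) (p : list nat) : Prop := Permutation (seq 0 l) p.

Definition rpow (N : nat) (r : R) : R := Rpower (INR N) r.

Definition inI (iv : list (R * R)) (B r1 : R) (N n : nat) : Prop :=
  exists ab, In ab iv /\
    fst ab * INR N + B * rpow N r1 < INR n < snd ab * INR N - rpow N r1.

(* Main.v *)
Require Import Defs.
From Stdlib Require Import Reals Arith ZArith List Permutation Sorted Lra Lia Classical ClassicalEpsilon.
Open Scope R_scope.

Fixpoint lsum (l : list nat) (f : nat -> R) : R :=
  match l with nil => 0 | a :: l' => f a + lsum l' f end.

Lemma lsum_ext l f g : (forall a, In a l -> f a = g a) -> lsum l f = lsum l g.
Proof. induction l; simpl; intros H; auto. rewrite H, IHl; auto. Qed.
Lemma lsum_plus l f g : lsum l (fun a => f a + g a) = lsum l f + lsum l g.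
Proof. induction l; simpl; [lra|]. rewrite IHl; lra. Qed.
Lemma lsum_scal l c f : lsum l (fun a => c * f a) = c * lsum l f.
Proof. induction l; simpl; [lra|]. rewrite IHl; lra. Qed.
Lemma lsum_le l f g : (forall a, In a l -> f a <= g a) -> lsum l f <= lsum l g.
Proof. induction l; simpl; intros H; [lra|]. pose proof (H a (or_introl eq_refl)).
  assert (lsum l f <= lsum l g) by auto. lra. Qed.
Lemma lsum_abs l f : Rabs (lsum l f) <= lsum l (fun a => Rabs (f a)).
Proof. induction l; simpl. rewrite Rabs_R0; lra.
  eapply Rle_trans. apply Rabs_triang. lra. Qed.
Lemma lsum_single l i f : NoDup l -> In i l ->
  lsum l (fun a => if Nat.eqb a i then f a else 0) = f i.
Proof. induction l; simpl; intros Hn Hi; [contradiction|].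
  inversion Hn; subst. destruct (Nat.eqb a i) eqn:E.
  - apply Nat.eqb_eq in E; subst. rewrite (lsum_ext _ _ (fun _ => 0)). 
    + clear. induction l; simpl; lra.
    + intros a Ha. destruct (Nat.eqb a i) eqn:E; auto. apply Nat.eqb_eq in E; subst; contradiction.
  - destruct Hi. subst. rewrite Nat.eqb_refl in E; discriminate. rewrite IHl; auto; lra. Qed.

Definition dsum (M : nat) (F : nat -> nat -> R) : R :=
  lsum (seq 0 M) (fun a => lsum (seq 0 M) (fun b => F a b)).

Lemma dsum_plus M F G : dsum M (fun a b => F a b + G a b) = dsum M F + dsum M G.
Proof. unfold dsum. rewrite <- lsum_plus. apply lsum_ext; intros. apply lsum_plus. Qed.
Lemma dsum_ext M F G : (forall a b, (a < M)%nat -> (b < M)%nat -> F a b = G a b) -> dsum M F = dsum M G.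
Proof. intros H; unfold dsum. apply lsum_ext; intros a Ha; apply lsum_ext; intros b Hb.
  apply in_seq in Ha; apply in_seq in Hb. apply H; lia. Qed.
Lemma dsum_single M i j v : (i < M)%nat -> (j < M)%nat ->
  dsum M (fun a b => if (Nat.eqb a i && Nat.eqb b j)%bool then v a b else 0) = v i j.
Proof. intros Hi Hj. unfold dsum.
  rewrite lsum_ext with (g := fun a => if Nat.eqb a i then lsum (seq 0 M) (fun b => if Nat.eqb b j then v a b else 0) else 0).
  - rewrite lsum_single by (apply seq_NoDup || (apply in_seq; lia)).
    rewrite lsum_single by (apply seq_NoDup || (apply in_seq; lia)). reflexivity.
  - intros a _. destruct (Nat.eqb a i); simpl. reflexivity. clear. induction (seq 0 M); simpl; lra.
Qed.

Definition expbound (M : nat) (q : bpoly) : Prop :=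
  forall c i j, In (c, i, j) q -> (i < M)%nat /\ (j < M)%nat.

Lemma bridge M q x y : expbound M q ->
  INR (beval q x y) = dsum M (fun a b => INR (bcoef q a b) * INR x ^ a * INR y ^ b).
Proof.
  induction q as [|[[c i] j] q IH]; intros Hb; simpl.
  - symmetry. unfold dsum. rewrite lsum_ext with (g := fun _ => 0).
    + clear. induction (seq 0 M); simpl; lra.
    + intros a _. rewrite lsum_ext with (g := fun _ => 0). clear. induction (seq 0 M); simpl; lra.
      intros; simpl; lra.
  - destruct (Hb c i j (or_introl eq_refl)) as [Hi Hj].
    rewrite plus_INR, IH by (intros c' i' j' H; apply (Hb c' i' j'); right; auto).
    rewrite mult_INR, mult_INR, !pow_INR.
    rewrite <- (dsum_single M i j (fun a b => INR c * INR x ^ a * INR y ^ b)) by auto.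
    rewrite <- dsum_plus. apply dsum_ext. intros a b _ _.
    try rewrite (Nat.eqb_sym i a), (Nat.eqb_sym j b).
    destruct (Nat.eqb a i && Nat.eqb b j)%bool; [rewrite plus_INR|]; ring.
Qed.

Fixpoint H (e : list R) (t : R) : R :=
  match e with nil => 0 | c :: e' => c + t * H e' t end.

Lemma H_sum f n : forall s t, t ^ s * H (map f (seq s n)) t = lsum (seq s n) (fun a => f a * t ^ a).
Proof. induction n; intros s t; simpl. ring. rewrite <- IHn. simpl. ring. Qed.

Lemma H_cont e : continuity (H e).
Proof. induction e; simpl.
  - apply continuity_const. intros x y; reflexivity.
  - change (continuity (fun t => (fun _ => a) t + (fun t => id t * H e t) t)).
    apply (continuity_plus (fun _ => a) (fun t => id t * H e t)).
    + apply continuity_const. intros x y; reflexivity.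
    + apply (continuity_mult id (H e)); auto. apply derivable_continuous, derivable_id.
Qed.

Lemma H_zero e : (forall t, H e t = 0) -> forall a, nth a e 0 = 0.
Proof. induction e as [|c e IH]; intros Hz a; simpl. destruct a; reflexivity.
  assert (Hc : c = 0) by (specialize (Hz 0); simpl in Hz; lra).
  assert (Hpos : forall t, t <> 0 -> H e t = 0).
  { intros t Ht. specialize (Hz t). simpl in Hz. rewrite Hc in Hz.
    rewrite Rplus_0_l in Hz. apply Rmult_integral in Hz. destruct Hz; [contradiction|auto]. }
  assert (H0 : H e 0 = 0).
  { destruct (Req_dec_T (H e 0) 0) as [|Hne]; auto. exfalso.
    pose proof (H_cont e 0 (Rabs (H e 0)) (Rabs_pos_lt _ Hne)) as [d [Hd Hdd]].
    specialize (Hdd (d/2)). simpl in Hdd. unfold R_dist in Hdd.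
    rewrite Hpos in Hdd by lra. rewrite Rminus_0_r, Rminus_0_l, Rabs_Ropp in Hdd.
    assert (Rabs (d/2) < d) by (rewrite Rabs_pos_eq; lra).
    assert (D_x no_cond 0 (d/2)) by (split; [exact I| lra]).
    specialize (Hdd (conj H1 H0)). lra. }
  destruct a. auto. apply IH. intros t. destruct (Req_dec_T t 0). subst; auto. auto.
Qed.

Lemma H_div e r : exists q, length q = pred (length e) /\ forall t, H e t = (t - r) * H q t + H e r.
Proof. induction e as [|c e IH].
  - exists nil. split; auto. intros; simpl; ring.
  - destruct e as [|c' e'].
    + exists nil. split; auto. intros; simpl; ring.
    + destruct IH as [q [Hl Hq]]. exists (H (c' :: e') r :: q). split.
      * simpl in *. lia.
      * intros t. change (H (c :: c' :: e') t) with (c + t * H (c' :: e') t).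
        change (H (c :: c' :: e') r) with (c + r * H (c' :: e') r).
        rewrite (Hq t). simpl. ring.
Qed.

Fixpoint prodR (rs : list R) (t : R) : R :=
  match rs with nil => 1 | r :: rs' => (t - r) * prodR rs' t end.

Lemma decomp n : forall e, (length e <= n)%nat ->
  (forall t, H e t = 0) \/
  exists rs g, (length rs <= length e)%nat /\ (forall r, In r rs -> 0 <= r <= 1) /\
    (forall t, 0 <= t <= 1 -> H g t <> 0) /\ (forall t, H e t = prodR rs t * H g t).
Proof. induction n; intros e Hl.
  - destruct e; [left; intros; reflexivity | simpl in Hl; lia].
  - destruct (classic (exists r, 0 <= r <= 1 /\ H e r = 0)) as [[r [Hr Hr0]]|Hno].
    + destruct (H_div e r) as [q [Hlq Hq]].
      destruct e as [|c e']. left; intros; reflexivity.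
      destruct (IHn q) as [Hz|[rs [g [A [B [C D]]]]]]. simpl in *; lia.
      * left. intros t. rewrite Hq, Hz, Hr0. ring.
      * right. exists (r :: rs), g. split; [|split; [|split]].
        -- simpl in *; lia.
        -- intros r' [<-|Hi]; auto.
        -- auto.
        -- intros t. rewrite Hq, Hr0, D. simpl. ring.
    + right. exists nil, e. split; [|split; [|split]]; simpl; auto. lia. contradiction.
      intros t Ht Hz. apply Hno; eauto. intros; ring.
Qed.

Lemma H_min g : (forall t, 0 <= t <= 1 -> H g t <> 0) ->
  exists gm, 0 < gm /\ forall t, 0 <= t <= 1 -> gm <= Rabs (H g t).
Proof. intros Hg.
  destruct (continuity_ab_min (fun t => Rabs (H g t)) 0 1) as [mx [Hm Hmx]].
  - lra.
  - intros c _. apply (continuity_pt_comp (H g) Rabs). apply H_cont. apply Rcontinuity_abs.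
  - exists (Rabs (H g mx)). split; auto. apply Rabs_pos_lt. auto.
Qed.

Lemma prod_bound rs t eta : 0 <= eta -> (forall r, In r rs -> eta <= Rabs (t - r)) ->
  eta ^ length rs <= Rabs (prodR rs t).
Proof. induction rs; intros He Hr; simpl. rewrite Rabs_R1; lra.
  rewrite Rabs_mult. apply Rmult_le_compat; auto. apply pow_le; auto. apply Hr; left; auto. apply IHrs; auto. intros; apply Hr; right; auto.
Qed.

Lemma prod_zero rs t : prodR rs t = 0 -> In t rs.
Proof. induction rs; simpl; intros Hz. lra.
  apply Rmult_integral in Hz. destruct Hz. left; lra. right; auto. Qed.

Lemma dsum_scal M c F : dsum M (fun a b => c * F a b) = c * dsum M F.
Proof. unfold dsum. rewrite <- lsum_scal. apply lsum_ext; intros. apply lsum_scal. Qed.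
Lemma dsum_abs M F : Rabs (dsum M F) <= dsum M (fun a b => Rabs (F a b)).
Proof. unfold dsum. eapply Rle_trans. apply lsum_abs. apply lsum_le; intros. apply lsum_abs. Qed.
Lemma dsum_le M F G : (forall a b, (a < M)%nat -> (b < M)%nat -> F a b <= G a b) -> dsum M F <= dsum M G.
Proof. intros HH; unfold dsum. apply lsum_le; intros a Ha; apply lsum_le; intros b Hb.
  apply in_seq in Ha; apply in_seq in Hb. apply HH; lia. Qed.

Lemma bcoef_nz M q i j : expbound M q -> bcoef q i j <> 0%nat -> (i < M)%nat /\ (j < M)%nat.
Proof. induction q as [|[[c i'] j'] q IH]; simpl; intros Hb Hn. lia.
  destruct (Nat.eqb i i' && Nat.eqb j j')%bool eqn:E.
  - apply Bool.andb_true_iff in E as [E1 E2]. apply Nat.eqb_eq in E1, E2; subst.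
    apply (Hb c); left; auto.
  - apply IH; auto. intros c0 i0 j0 Hi; apply (Hb c0); right; auto.
Qed.

Lemma max_nat (P : nat -> Prop) B : (exists k, P k) -> (forall k, P k -> (k <= B)%nat) ->
  exists K, P K /\ forall k, P k -> (k <= K)%nat.
Proof. revert P. induction B; intros P [k Hk] Hb.
  - exists k. split; auto. intros k' Hk'. pose proof (Hb k' Hk'). pose proof (Hb k Hk). lia.
  - destruct (classic (P (S B))). exists (S B); split; auto.
    apply IHB. eauto. intros k' Hk'. specialize (Hb k' Hk'). destruct (Nat.eq_dec k' (S B)).
    subst; contradiction. lia.
Qed.

Lemma pow_le1 t a : 0 <= t <= 1 -> 0 <= t ^ a <= 1.
Proof. intros Ht. induction a; simpl. lra. split. apply Rmult_le_pos; lra.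
  replace 1 with (1*1) by ring. apply Rmult_le_compat; lra. Qed.

Lemma approx M (delta : nat -> nat -> R) K :
  (forall a b, (a < M)%nat -> (b < M)%nat -> delta a b <> 0 -> (a + b <= K)%nat) -> (1 <= K)%nat ->
  forall t y, 0 <= t <= 1 -> 1 <= y ->
  Rabs (dsum M (fun a b => delta a b * (t * y) ^ a * y ^ b) -
        y ^ K * H (map (fun a => lsum (seq 0 M) (fun b => if Nat.eqb (a + b) K then delta a b else 0)) (seq 0 M)) t)
  <= dsum M (fun a b => Rabs (delta a b)) * y ^ (K - 1).
Proof. intros HK HK1 t y Ht Hy.
  pose proof (H_sum (fun a => lsum (seq 0 M) (fun b => if Nat.eqb (a + b) K then delta a b else 0)) M 0 t) as HS.
  simpl pow in HS. rewrite Rmult_1_l in HS. rewrite HS. clear HS.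
  rewrite <- lsum_scal.
  replace (lsum (seq 0 M) (fun a => y ^ K * (lsum (seq 0 M) (fun b => if Nat.eqb (a + b) K then delta a b else 0) * t ^ a)))
    with (dsum M (fun a b => (t ^ a * y ^ K) * (if Nat.eqb (a + b) K then delta a b else 0))).
  2:{ unfold dsum. apply lsum_ext. intros a _. rewrite lsum_scal. ring. }
  assert (Hc: forall F G, dsum M F - dsum M G = dsum M (fun a b => F a b + -1 * G a b))
    by (intros; rewrite dsum_plus, dsum_scal; ring).
  rewrite Hc. rewrite (Rmult_comm (dsum M _)). rewrite <- dsum_scal.
  eapply Rle_trans. apply dsum_abs. apply dsum_le. intros a b Ha Hb.
  rewrite (Rmult_comm (y ^ (K-1))). rewrite Rpow_mult_distr.
  destruct (Nat.eqb (a + b) K) eqn:E.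
  - apply Nat.eqb_eq in E. rewrite <- E, pow_add.
    replace (delta a b * (t ^ a * y ^ a) * y ^ b + -1 * (t ^ a * (y ^ a * y ^ b) * delta a b)) with 0 by ring.
    rewrite Rabs_R0. apply Rmult_le_pos. apply Rabs_pos. apply pow_le; lra.
  - destruct (Req_dec_T (delta a b) 0) as [Hz|Hz].
    + replace (delta a b * (t ^ a * y ^ a) * y ^ b + -1 * (t ^ a * y ^ K * 0)) with 0 by (rewrite Hz; ring).
      rewrite Rabs_R0. apply Rmult_le_pos. apply Rabs_pos. apply pow_le; lra.
    + specialize (HK a b Ha Hb Hz). apply Nat.eqb_neq in E.
      replace (delta a b * (t ^ a * y ^ a) * y ^ b + -1 * (t ^ a * y ^ K * 0)) with (delta a b * t ^ a * y ^ (a + b))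
        by (rewrite pow_add; ring).
      rewrite !Rabs_mult. rewrite (Rabs_pos_eq (y ^ (a+b))) by (apply pow_le; lra).
      pose proof (pow_le1 t a Ht). rewrite (Rabs_pos_eq (t ^ a)) by lra.
      assert (y ^ (a + b) <= y ^ (K - 1)) by (apply Rle_pow; [lra|lia]).
      pose proof (Rabs_pos (delta a b)). pose proof (pow_le y (a+b)).
      replace (Rabs (delta a b) * y ^ (K - 1)) with (Rabs (delta a b) * 1 * y ^ (K - 1)) by ring.
      apply Rmult_le_compat; try apply Rmult_le_compat; try lra. all: try (apply Rmult_le_pos; lra).
Qed.

Lemma dsum_minus M F G : dsum M F - dsum M G = dsum M (fun a b => F a b - G a b).
Proof. unfold Rminus. rewrite <- (Rmult_1_l (dsum M G)), Ropp_mult_distr_l, <- dsum_scal, <- dsum_plus.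
  apply dsum_ext; intros; ring. Qed.

Lemma nth_map_seq (f : nat -> R) n a : (a < n)%nat -> nth a (map f (seq 0 n)) 0 = f a.
Proof. intros. rewrite nth_indep with (d' := f 0%nat) by (rewrite length_map, length_seq; lia).
  rewrite map_nth, seq_nth by lia. reflexivity. Qed.

Lemma package M qa qb : expbound M qa -> expbound M qb -> ~ diff_constant qa qb ->
 exists (e : list R) (K : nat) (C : R) (rs : list R) (gm : R),
  (1 <= K)%nat /\ 0 <= C /\ 0 < gm /\ (length rs <= M)%nat /\ (forall r, In r rs -> 0 <= r <= 1) /\
  (forall n N, (1 <= N)%nat -> (n <= N)%nat ->
     Rabs ((INR (beval qb n N) - INR (beval qa n N)) - INR N ^ K * H e (INR n / INR N)) <= C * INR N ^ (K-1)) /\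
  (forall t, 0 <= t <= 1 -> H e t = 0 -> In t rs) /\
  (forall t eta, 0 <= t <= 1 -> 0 <= eta -> (forall r, In r rs -> eta <= Rabs (t - r)) ->
     gm * eta ^ length rs <= Rabs (H e t)).
Proof.
  intros Ha Hb Hnd.
  set (delta := fun a b => INR (bcoef qb a b) - INR (bcoef qa a b)).
  assert (Hex : exists i j, (i, j) <> (0%nat, 0%nat) /\ bcoef qa i j <> bcoef qb i j).
  { apply NNPP. intros Hn. apply Hnd. intros i j Hij. apply NNPP. intros Hne. apply Hn. eauto. }
  destruct Hex as [i0 [j0 [Hij0 Hne0]]].
  assert (Hb0 : (i0 < M)%nat /\ (j0 < M)%nat).
  { destruct (Nat.eq_dec (bcoef qa i0 j0) 0) as [E|E].
    - apply (bcoef_nz M qb); auto. lia.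
    - apply (bcoef_nz M qa); auto. }
  assert (Hd0 : delta i0 j0 <> 0).
  { unfold delta. intros E. apply Hne0. apply INR_eq. lra. }
  destruct (max_nat (fun k => exists a b, (a < M)%nat /\ (b < M)%nat /\ (a + b)%nat = k /\ delta a b <> 0) (M + M))
    as [K [[a0 [b0 [Ha0 [Hb0' [HK0 Hd]]]]] HKmax]].
  { exists (i0 + j0)%nat, i0, j0. tauto. }
  { intros k [a [b [? [? [? ?]]]]]. lia. }
  assert (HKb : forall a b, (a < M)%nat -> (b < M)%nat -> delta a b <> 0 -> (a + b <= K)%nat).
  { intros a b ? ? ?. apply HKmax. exists a, b. tauto. }
  assert (HK1 : (1 <= K)%nat).
  { assert (i0 + j0 <= K)%nat by (apply HKb; tauto). destruct i0, j0; try lia. contradiction. }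
  set (e := map (fun a => lsum (seq 0 M) (fun b => if Nat.eqb (a + b) K then delta a b else 0)) (seq 0 M)).
  assert (Hecoef : nth a0 e 0 <> 0).
  { unfold e. rewrite nth_map_seq by lia.
    rewrite lsum_ext with (g := fun b => if Nat.eqb b b0 then delta a0 b else 0).
    - rewrite lsum_single; auto. apply seq_NoDup. apply in_seq; lia.
    - intros b _. destruct (Nat.eqb (a0 + b) K) eqn:E1, (Nat.eqb b b0) eqn:E2; auto.
      + apply Nat.eqb_eq in E1; apply Nat.eqb_neq in E2; lia.
      + apply Nat.eqb_neq in E1; apply Nat.eqb_eq in E2; lia. }
  destruct (decomp (length e) e (le_n _)) as [Hz|[rs [g [Hlr [Hr01 [Hg Hfac]]]]]].
  { exfalso. apply Hecoef. apply H_zero. auto. }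
  destruct (H_min g Hg) as [gm [Hgm Hgmb]].
  exists e, K, (dsum M (fun a b => Rabs (delta a b))), rs, gm.
  assert (HyK : forall N, (1 <= N)%nat -> 1 <= INR N) by (intros N HN; apply (le_INR 1); auto).
  split; [auto|]. split.
  { apply Rle_trans with (dsum M (fun _ _ => 0)).
    - right. unfold dsum. rewrite (lsum_ext _ _ (fun _ => 0)).
      + clear. induction (seq 0 M); simpl; lra.
      + intros. clear. induction (seq 0 M); simpl; lra.
    - apply dsum_le. intros; apply Rabs_pos. }
  split; [auto|]. split.
  { unfold e in Hlr. rewrite length_map, length_seq in Hlr. auto. }
  split; [auto|]. split; [|split].
  - intros n N HN HnN. pose proof (HyK N HN) as Hy.
    rewrite (bridge M qb), (bridge M qa), dsum_minus by auto.
    assert (Hx : INR n = INR n / INR N * INR N) by (field; lra).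
    rewrite (dsum_ext _ _ (fun a b => delta a b * (INR n / INR N * INR N) ^ a * INR N ^ b))
      by (intros; unfold delta; rewrite <- Hx; ring).
    apply approx; auto.
    split. apply Rmult_le_pos. apply pos_INR. left; apply Rinv_0_lt_compat; lra.
    apply Rmult_le_reg_r with (INR N). lra. unfold Rdiv. rewrite Rmult_assoc, Rinv_l by lra.
    rewrite Rmult_1_r, Rmult_1_l. apply le_INR; auto.
  - intros t Ht Hz. rewrite Hfac in Hz. apply Rmult_integral in Hz. destruct Hz as [Hz|Hz].
    apply prod_zero; auto. exfalso; apply (Hg t); auto.
  - intros t eta Ht Heta Hr. rewrite Hfac, Rabs_mult, Rmult_comm.
    apply Rmult_le_compat. apply pow_le; auto. lra. apply prod_bound; auto. apply Hgmb; auto.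
Qed.

Fixpoint ins (v : nat -> R) (x : nat) (p : list nat) : list nat :=
  match p with nil => x :: nil | y :: p' => if Rlt_dec (v x) (v y) then x :: y :: p' else y :: ins v x p' end.

Lemma ins_perm v x p : Permutation (x :: p) (ins v x p).
Proof. induction p; simpl. auto. destruct (Rlt_dec (v x) (v a)). auto.
  eapply perm_trans. apply perm_swap. auto. Qed.

Lemma ins_hd v x y p : HdRel (fun a b => v a < v b) y p -> v y < v x -> HdRel (fun a b => v a < v b) y (ins v x p).
Proof. destruct p; simpl; intros H1 H2. constructor; auto.
  destruct (Rlt_dec (v x) (v n)); constructor; auto. inversion H1; auto. Qed.

Lemma ins_sorted v x p : Sorted (fun a b => v a < v b) p -> (forall y, In y p -> v x <> v y) ->
  Sorted (fun a b => v a < v b) (ins v x p).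
Proof. induction p; simpl; intros Hs Hd. constructor; auto.
  apply Sorted_inv in Hs as [Hs Hh]. destruct (Rlt_dec (v x) (v a)).
  - constructor. constructor; auto. constructor; auto.
  - constructor. apply IHp; auto. apply ins_hd; auto.
    assert (v x <> v a) by auto. lra.
Qed.

Lemma sort_exists (v : nat -> R) s : NoDup s -> (forall a b, In a s -> In b s -> a <> b -> v a <> v b) ->
  exists p, Permutation s p /\ Sorted (fun a b => v a < v b) p.
Proof. induction s as [|x s IH]; intros Hn Hd. exists nil; auto.
  inversion Hn as [|? ? Hnin Hns]; subst. destruct IH as [p [Hp Hs]]; auto.
  intros; apply Hd; simpl; auto.
  exists (ins v x p). split.
  - eapply perm_trans. apply perm_skip, Hp. apply ins_perm.
  - apply ins_sorted; auto. intros y Hy. apply Hd; simpl; auto. right. apply Permutation_in with p; auto.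
    apply Permutation_sym; auto. intros ->. apply Hnin. apply Permutation_in with p; auto. apply Permutation_sym; auto.
Qed.

Lemma sorted_nth (Rl : nat -> nat -> Prop) p : Sorted Rl p -> forall i, (S i < length p)%nat -> Rl (nth i p 0%nat) (nth (S i) p 0%nat).
Proof. induction p; simpl; intros Hs i Hi. lia.
  apply Sorted_inv in Hs as [Hs Hh]. destruct i.
  - destruct p. simpl in Hi; lia. simpl. inversion Hh; auto.
  - apply IHp; auto. lia. Qed.

Lemma rpow_pos N r : 0 < rpow N r.
Proof. unfold rpow, Rpower. apply exp_pos. Qed.

Lemma Rpower_quarter y : 0 < y -> Rpower (Rpower y (/4)) 4 = y.
Proof. intros. rewrite Rpower_mult. replace (/4 * 4) with 1 by field. apply Rpower_1; auto. Qed.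

Lemma Rpower_pow4 w : 0 < w -> w ^ 4 = Rpower w 4.
Proof. intros. replace 4 with (INR 4) by (simpl; ring). rewrite Rpower_pow; auto. Qed.

Lemma Rabs_le_between x a : Rabs x <= a -> - a <= x <= a.
Proof. unfold Rabs; destruct (Rcase_abs x); lra. Qed.

Lemma strong_real y K C gm h D : 1 <= y -> (1 <= K)%nat -> 0 <= C -> 0 < gm ->
  (1 + (1 + C) / gm) ^ 4 <= y -> gm * Rpower y (- / 4) <= Rabs h ->
  Rabs (D - y ^ K * h) <= C * y ^ (K - 1) ->
  (0 < h -> sqrt y <= D) /\ (h <= 0 -> D <= - sqrt y).
Proof. intros Hy HK HC Hgm HW Hh HD.
  set (W := 1 + (1 + C) / gm) in *.
  assert (HW1 : 1 <= W). { unfold W. assert (0 <= (1 + C)/gm) by (apply Rmult_le_pos; [lra| left; apply Rinv_0_lt_compat; lra]). lra. }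
  set (w := Rpower y (/4)).
  assert (Hw : W <= w).
  { unfold w. replace W with (Rpower (W ^ 4) (/4)) at 1.
    apply Rle_Rpower_l. lra. split; auto. apply pow_lt; lra.
    rewrite Rpower_pow4, Rpower_mult by lra. replace (4 * /4) with 1 by field. apply Rpower_1; lra. }
  assert (Hyw : y = w ^ 4).
  { unfold w. rewrite Rpower_pow4 by (unfold Rpower; apply exp_pos). rewrite Rpower_quarter. reflexivity. lra. }
  assert (Hsq : sqrt y = w ^ 2).
  { rewrite <- Rpower_sqrt by lra. unfold w. replace 2%nat with (Z.to_nat 2) by reflexivity.
    rewrite <- (Rpower_pow 2) by (unfold Rpower; apply exp_pos). rewrite Rpower_mult. f_equal. simpl. field. }
  assert (Hinv : Rpower y (- / 4) = / w) by (unfold w; apply Rpower_Ropp).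
  rewrite Hinv in Hh. rewrite Hsq.
  assert (Hw0 : 0 < w) by lra.
  assert (HgW : gm * w >= 1 + C + gm).
  { unfold W in Hw. apply Rmult_le_compat_l with (r := gm) in Hw; [|lra].
    replace (gm * (1 + (1 + C) / gm)) with (gm + (1 + C)) in Hw by (field; lra). lra. }
  assert (Hh2 : gm <= w * Rabs h).
  { apply Rmult_le_compat_l with (r := w) in Hh; [|lra]. replace (w * (gm * / w)) with gm in Hh by (field; lra). lra. }
  set (Y := y ^ (K - 1)) in *.
  assert (HY : 1 <= Y) by (unfold Y; replace 1 with (y ^ 0) by reflexivity; apply Rle_pow; [lra|lia]).
  assert (HyK : y ^ K = Y * w ^ 4) by (unfold Y; rewrite <- Hyw; replace K with (S (K - 1)) at 1 by lia; simpl; ring).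
  rewrite HyK in HD.
  assert (Hbig : Y * w ^ 4 * Rabs h - C * Y >= w ^ 2).
  { assert (H1 : Y * w ^ 4 * Rabs h >= Y * gm * w ^ 3).
    { replace (Y * w ^ 4 * Rabs h) with (Y * w ^ 3 * (w * Rabs h)) by ring.
      replace (Y * gm * w ^ 3) with (Y * w ^ 3 * gm) by ring.
      apply Rle_ge, Rmult_le_compat_l; auto. apply Rmult_le_pos. lra. apply pow_le; lra. }
    assert (H2 : gm * w ^ 3 >= (1 + C) * w ^ 2).
    { replace (gm * w ^ 3) with ((gm * w) * w ^ 2) by ring. apply Rle_ge, Rmult_le_compat_r.
      apply pow_le; lra. lra. }
    assert (H3 : w ^ 2 >= 1) by (replace 1 with (1 ^ 2) by ring; apply Rle_ge, pow_incr; lra).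
    assert (H4 : Y * (gm * w ^ 3 - C) >= gm * w ^ 3 - C).
    { assert (0 <= gm * w ^ 3 - C) by nra. nra. }
    nra. }
  split; intros Hs.
  - rewrite Rabs_pos_eq in Hbig by lra. apply Rabs_le_between in HD. lra.
  - rewrite Rabs_left1 in Hbig by lra. apply Rabs_le_between in HD. lra.
Qed.

Lemma eta_bound y r1 M L : 1 <= y -> (L <= M)%nat -> r1 < 1 -> INR M * (1 - r1) <= /4 ->
  Rpower y (- / 4) <= (Rpower y (r1 - 1)) ^ L.
Proof. intros Hy HL Hr HM.
  rewrite <- Rpower_pow by (unfold Rpower; apply exp_pos). rewrite Rpower_mult.
  apply Rle_Rpower; auto. apply le_INR in HL. pose proof (pos_INR L). nra. Qed.

Lemma dist_conv y r1 x r : 1 <= y -> Rpower y r1 <= Rabs (x - r * y) -> Rpower y (r1 - 1) <= Rabs (x / y - r).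
Proof. intros Hy Hd. unfold Rminus at 1. rewrite Rpower_plus, Rpower_Ropp, Rpower_1 by lra.
  replace (x / y - r) with ((x - r * y) * / y) by (field; lra).
  rewrite Rabs_mult, (Rabs_pos_eq (/ y)) by (left; apply Rinv_0_lt_compat; lra).
  apply Rmult_le_compat_r; auto. left; apply Rinv_0_lt_compat; lra. Qed.

Lemma large_Y d r1 : 0 < d -> r1 < 1 -> exists Y, 1 <= Y /\ forall y, Y <= y -> 2 * Rpower y r1 + 2 <= d * y.
Proof. intros Hd Hr.
  exists (Rmax (Rmax 1 (4 / d)) (exp (ln (d / 4) / (r1 - 1)))). split.
  - eapply Rle_trans; [|apply Rmax_l]. apply Rmax_l.
  - intros y Hy.
    assert (Hy1 : 1 <= y) by (eapply Rle_trans; [|apply Hy]; eapply Rle_trans; [|apply Rmax_l]; apply Rmax_l).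
    assert (Hy2 : 4 / d <= y) by (eapply Rle_trans; [|apply Hy]; eapply Rle_trans; [|apply Rmax_l]; apply Rmax_r).
    assert (Hy3 : exp (ln (d / 4) / (r1 - 1)) <= y) by (eapply Rle_trans; [|apply Hy]; apply Rmax_r).
    assert (Heta : Rpower y (r1 - 1) <= d / 4).
    { unfold Rpower. rewrite <- (exp_ln (d / 4)) by lra.
      assert (Hl : ln (d / 4) / (r1 - 1) <= ln y).
      { rewrite <- (ln_exp (ln (d / 4) / (r1 - 1))).
        destruct (Rle_lt_or_eq_dec _ _ Hy3) as [Hlt|Heq].
        - left. apply ln_increasing; auto. apply exp_pos.
        - rewrite Heq; lra. }
      assert (Hm : (r1 - 1) * ln y <= ln (d / 4)).
      { apply Rmult_le_compat_neg_l with (r := r1 - 1) in Hl; [|lra].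
        replace ((r1 - 1) * (ln (d / 4) / (r1 - 1))) with (ln (d / 4)) in Hl by (field; lra). lra. }
      destruct (Rle_lt_or_eq_dec _ _ Hm) as [Hlt|Heq]. left; apply exp_increasing; auto. rewrite Heq; lra. }
    assert (Hsplit : Rpower y r1 = y * Rpower y (r1 - 1)).
    { replace r1 with (1 + (r1 - 1)) at 1 by ring. rewrite Rpower_plus, Rpower_1; lra. }
    rewrite Hsplit.
    assert (d * y >= 4) by (apply Rmult_le_compat_r with (r := d) in Hy2; [|lra];
      replace (4 / d * d) with 4 in Hy2 by (field; lra); lra).
    assert (y * Rpower y (r1 - 1) <= y * (d / 4)) by (apply Rmult_le_compat_l; lra).
    lra.
Qed.

Lemma nat_large Y : exists N0 : nat, forall N, (N0 <= N)%nat -> Y <= INR N.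
Proof. exists (Z.to_nat (up (Rabs Y))). intros N HN. apply le_INR in HN.
  destruct (archimed (Rabs Y)) as [H1 H2]. pose proof (Rabs_pos Y).
  assert (IZR (up (Rabs Y)) > 0) by lra.
  assert (0 <= up (Rabs Y))%Z by (apply le_IZR; lra).
  rewrite INR_IZR_INZ, Z2Nat.id in HN by auto. pose proof (Rle_abs Y). lra. Qed.

Lemma n_in_gap s s' y r1 : 0 <= s -> s < s' -> s' <= 1 -> 1 <= y -> 2 * Rpower y r1 + 2 <= (s' - s) * y ->
  exists n : nat, INR n <= y /\ s * y + Rpower y r1 < INR n < s' * y - Rpower y r1.
Proof. intros H0 H1 H2 Hy Hg. pose proof (rpow_pos 1 r1) as _.
  assert (Hp : 0 < Rpower y r1) by (unfold Rpower; apply exp_pos).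
  exists (Z.to_nat (up (s * y + Rpower y r1))).
  destruct (archimed (s * y + Rpower y r1)) as [A1 A2].
  assert (0 <= up (s * y + Rpower y r1))%Z by (apply le_IZR; nra).
  rewrite INR_IZR_INZ, Z2Nat.id by auto. nra. Qed.

Lemma sign_const e (Sp : list R) s s' u v : 0 <= s -> s' <= 1 -> (forall z, In z Sp -> ~ (s < z < s')) ->
  (forall t, 0 <= t <= 1 -> H e t = 0 -> In t Sp) -> s < u < s' -> s < v < s' -> 0 < H e u -> 0 < H e v.
Proof. intros H0 H1 Hn Hr Hu Hv Hp.
  destruct (Rlt_le_dec 0 (H e v)) as [|Hle]; auto. exfalso.
  destruct (Rle_lt_or_eq_dec _ _ Hle) as [Hlt|Heq].
  - destruct (Rlt_le_dec v u) as [Hvu|Huv].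
    + destruct (IVT (H e) v u (H_cont e) Hvu Hlt Hp) as [z [Hz Hz0]].
      apply (Hn z); [apply Hr|]; lra.
    + destruct (Rle_lt_or_eq_dec _ _ Huv) as [Huv'|Huv']; [|subst; lra].
      destruct (IVT (fun t => - H e t) u v) as [z [Hz Hz0]]; auto.
      apply continuity_opp, H_cont. lra. lra.
      apply (Hn z); [apply Hr|]; lra.
  - apply (Hn v); [apply Hr|]; lra.
Qed.

Lemma unif (P : nat -> nat -> Prop) l : (forall a, (a < l)%nat -> exists N0, forall N, (N0 <= N)%nat -> P a N) ->
  exists N0, forall a, (a < l)%nat -> forall N, (N0 <= N)%nat -> P a N.
Proof. induction l; intros Hp. exists 0%nat; intros; lia.
  destruct IHl as [N1 HN1]. intros; apply Hp; lia.
  destruct (Hp l) as [N2 HN2]. lia.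
  exists (Nat.max N1 N2). intros a Ha N HN. destruct (Nat.eq_dec a l). subst; apply HN2; lia.
  apply HN1; lia. Qed.

Lemma gap_disj (Sp : list R) s1 s1' s2 s2' x : In s1 Sp -> In s1' Sp -> In s2 Sp -> In s2' Sp ->
  (forall z, In z Sp -> ~ (s1 < z < s1')) -> (forall z, In z Sp -> ~ (s2 < z < s2')) ->
  s1 < x < s1' -> s2 < x < s2' -> s1 = s2 /\ s1' = s2'.
Proof. intros A1 A2 A3 A4 N1 N2 X1 X2.
  destruct (Rtotal_order s1 s2) as [Hl|[He|Hg]].
  - exfalso; apply (N1 s2); auto; lra.
  - split; auto. destruct (Rtotal_order s1' s2') as [Hl|[He'|Hg]]; auto.
    + exfalso; apply (N2 s1'); auto; lra.
    + exfalso; apply (N1 s2'); auto; lra.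
  - exfalso; apply (N2 s1); auto; lra.
Qed.

Lemma max_in (Sp : list R) (P : R -> Prop) : (exists z, In z Sp /\ P z) ->
  exists m, In m Sp /\ P m /\ forall z, In z Sp -> P z -> z <= m.
Proof. induction Sp as [|a Sp IH]; intros [z [Hz Pz]]. destruct Hz.
  destruct (classic (exists z, In z Sp /\ P z)) as [Hex|Hno].
  - destruct (IH Hex) as [m [Hm [Pm Hmax]]].
    destruct (classic (P a /\ m <= a)) as [[Pa Ha]|Hna].
    + exists a. split; [left; auto|split; auto]. intros z' [<-|Hz'] Pz'. lra. specialize (Hmax z' Hz' Pz'). lra.
    + exists m. split; [right; auto|split; auto]. intros z' [<-|Hz'] Pz'.
      apply Rnot_lt_le. intros Hlt. apply Hna. split; auto; lra. auto.
  - destruct Hz as [<-|Hz]; [|exfalso; apply Hno; eauto].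
    exists a. split; [left; auto|split; auto]. intros z' [<-|Hz'] Pz'. lra. exfalso; apply Hno; eauto.
Qed.

Lemma min_in (Sp : list R) (P : R -> Prop) : (exists z, In z Sp /\ P z) ->
  exists m, In m Sp /\ P m /\ forall z, In z Sp -> P z -> m <= z.
Proof. intros Hex. destruct (max_in (map Ropp Sp) (fun z => P (- z))) as [m [Hm [Pm Hmax]]].
  - destruct Hex as [z [Hz Pz]]. exists (- z). split. apply in_map; auto. rewrite Ropp_involutive; auto.
  - apply in_map_iff in Hm as [m' [<- Hm']]. exists m'. split; auto. rewrite Ropp_involutive in Pm. split; auto.
    intros z Hz Pz. assert (- z <= - m'). apply Hmax. apply in_map; auto. rewrite Ropp_involutive; auto. lra.
Qed.

Record Pkg := mkPkg { pe : list R; pK : nat; pC : R; prs : list R; pgm : R }.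

Definition PkOK (M : nat) (qa qb : bpoly) (x : Pkg) : Prop :=
  (1 <= pK x)%nat /\ 0 <= pC x /\ 0 < pgm x /\ (length (prs x) <= M)%nat /\
  (forall n N, (1 <= N)%nat -> (n <= N)%nat ->
     Rabs ((INR (beval qb n N) - INR (beval qa n N)) - INR N ^ pK x * H (pe x) (INR n / INR N))
       <= pC x * INR N ^ (pK x - 1)) /\
  (forall t, 0 <= t <= 1 -> H (pe x) t = 0 -> In t (prs x)) /\
  (forall t eta, 0 <= t <= 1 -> 0 <= eta -> (forall r, In r (prs x) -> eta <= Rabs (t - r)) ->
     pgm x * eta ^ length (prs x) <= Rabs (H (pe x) t)).

Definition mexp (q : bpoly) : nat :=
  fold_right (fun m acc => match m with (c, i, j) => Nat.max (Nat.max i j) acc end) 0%nat q.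
Definition Mb (qs : list bpoly) : nat := S (fold_right Nat.max 0%nat (map mexp qs)).

Lemma mexp_ge q c i j : In (c, i, j) q -> (Nat.max i j <= mexp q)%nat.
Proof. induction q as [|[[c' i'] j'] q IH]; simpl; intros Hi. contradiction.
  destruct Hi as [E|Hi]. inversion E; subst; lia. specialize (IH Hi). lia. Qed.

Lemma fold_max_ge (qs : list bpoly) q : In q qs -> (mexp q <= fold_right Nat.max 0%nat (map mexp qs))%nat.
Proof. induction qs; simpl; intros Hin. contradiction. destruct Hin as [E|Hin]. subst; lia.
  specialize (IHqs Hin). lia. Qed.

Lemma Mb_bound qs a : (a < length qs)%nat -> expbound (Mb qs) (nth a qs nil).
Proof. intros Ha c i j Hi. apply mexp_ge in Hi.
  pose proof (fold_max_ge qs (nth a qs nil) (nth_In _ _ Ha)).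
  unfold Mb. lia. Qed.

Definition HND (qs : list bpoly) : Prop :=
  forall i j, (i < length qs)%nat -> (j < length qs)%nat -> i <> j -> ~ diff_constant (nth i qs nil) (nth j qs nil).

Definition pkValid qs a b (x : Pkg) : Prop :=
  (forall r, In r (prs x) -> 0 <= r <= 1) /\
  ((a < length qs)%nat -> (b < length qs)%nat -> a <> b -> PkOK (Mb qs) (nth a qs nil) (nth b qs nil) x).

Definition pk qs a b : Pkg := epsilon (inhabits (mkPkg nil 0 0 nil 0)) (pkValid qs a b).

Lemma pk_spec qs a b : HND qs -> pkValid qs a b (pk qs a b).
Proof. intros Hnd. unfold pk. apply epsilon_spec.
  destruct (classic ((a < length qs)%nat /\ (b < length qs)%nat /\ a <> b)) as [[Ha [Hb Hab]]|Hno].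
  - destruct (package (Mb qs) (nth a qs nil) (nth b qs nil)) as [e [K [C [rs [gm P]]]]].
    apply Mb_bound; auto. apply Mb_bound; auto. apply Hnd; auto.
    exists (mkPkg e K C rs gm). unfold pkValid, PkOK; simpl. tauto.
  - exists (mkPkg nil 0 0 nil 0). split. simpl; tauto. intros; exfalso; auto.
Qed.

Definition Sall qs : list R :=
  0 :: 1 :: flat_map (fun a => flat_map (fun b => prs (pk qs a b)) (seq 0 (length qs))) (seq 0 (length qs)).
Definition Sp qs : list R := nodup Req_dec_T (Sall qs).

Lemma Sp_01 qs z : HND qs -> In z (Sp qs) -> 0 <= z <= 1.
Proof. intros Hnd Hz. unfold Sp in Hz. apply nodup_In in Hz. simpl in Hz.
  destruct Hz as [<-|[<-|Hz]]; try lra. apply in_flat_map in Hz as [a [_ Hz]].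
  apply in_flat_map in Hz as [b [_ Hz]]. apply (proj1 (pk_spec qs a b Hnd)); auto. Qed.

Lemma Sp_0 qs : In 0 (Sp qs).
Proof. unfold Sp. apply nodup_In. simpl; auto. Qed.
Lemma Sp_1 qs : In 1 (Sp qs).
Proof. unfold Sp. apply nodup_In. simpl; auto. Qed.
Lemma Sp_roots qs a b r : (a < length qs)%nat -> (b < length qs)%nat -> In r (prs (pk qs a b)) -> In r (Sp qs).
Proof. intros Ha Hb Hr. unfold Sp. apply nodup_In. simpl. right; right.
  apply in_flat_map. exists a. split. apply in_seq; lia. apply in_flat_map. exists b. split; auto. apply in_seq; lia. Qed.

Definition RR_dec (x y : R * R) : {x = y} + {x <> y}.
Proof. decide equality; apply Req_dec_T. Defined.

Definition isgap (S0 : list R) (g : R * R) : Prop :=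
  fst g < snd g /\ forall z, In z S0 -> ~ (fst g < z < snd g).

Definition Gaps qs : list (R * R) :=
  nodup RR_dec (filter (fun g => if excluded_middle_informative (isgap (Sp qs) g) then true else false)
    (list_prod (Sp qs) (Sp qs))).

Lemma Gaps_iff qs g : In g (Gaps qs) <-> In (fst g) (Sp qs) /\ In (snd g) (Sp qs) /\ isgap (Sp qs) g.
Proof. destruct g as [s s']. unfold Gaps. rewrite nodup_In, filter_In, in_prod_iff. simpl.
  destruct (excluded_middle_informative (isgap (Sp qs) (s, s'))) as [Hg|Hg]; split; intros Hx.
  - tauto.
  - tauto.
  - destruct Hx as [_ Hf]; discriminate.
  - destruct Hx as [_ [_ Hx]]; contradiction. Qed.

Definition r1q r0 qs : R := Rmax r0 (1 - / (4 * (INR (Mb qs) + 1))).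

Lemma r1q_props r0 qs : 0 < r0 < 1 -> 0 < r1q r0 qs < 1 /\ r0 <= r1q r0 qs /\ INR (Mb qs) * (1 - r1q r0 qs) <= / 4.
Proof. intros Hr. unfold r1q. set (m := INR (Mb qs)). assert (0 <= m) by apply pos_INR.
  assert (Hi : 0 < / (4 * (m + 1))) by (apply Rinv_0_lt_compat; lra).
  assert (Hm : m * / (4 * (m + 1)) <= / 4).
  { apply Rmult_le_reg_r with (4 * (m + 1)). lra.
    replace (m * / (4 * (m + 1)) * (4 * (m + 1))) with m by (field; lra).
    replace (/ 4 * (4 * (m + 1))) with (m + 1) by field. lra. }
  pose proof (Rmax_l r0 (1 - / (4 * (m + 1)))). pose proof (Rmax_r r0 (1 - / (4 * (m + 1)))).
  split; [split|split]; try lra.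
  - apply Rmax_lub_lt; lra.
  - assert (1 - Rmax r0 (1 - / (4 * (m + 1))) <= / (4 * (m + 1))) by lra. nra.
Qed.

Definition Strong qs r1 a b N : Prop := forall n, (n <= N)%nat ->
  (forall r, In r (prs (pk qs a b)) -> rpow N r1 <= Rabs (INR n - r * INR N)) ->
  (0 < H (pe (pk qs a b)) (INR n / INR N) ->
     sqrt (INR N) <= INR (beval (nth b qs nil) n N) - INR (beval (nth a qs nil) n N)) /\
  (H (pe (pk qs a b)) (INR n / INR N) <= 0 ->
     INR (beval (nth b qs nil) n N) - INR (beval (nth a qs nil) n N) <= - sqrt (INR N)).

Lemma strong_pair qs r0 a b : HND qs -> 0 < r0 < 1 -> (a < length qs)%nat -> (b < length qs)%nat -> a <> b ->
  exists N0, forall N, (N0 <= N)%nat -> Strong qs (r1q r0 qs) a b N.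
Proof. intros Hnd Hr0 Ha Hb Hab.
  destruct (pk_spec qs a b Hnd) as [_ Hok]. specialize (Hok Ha Hb Hab).
  destruct Hok as [HK [HC [Hgm [HL [P1 [P2 P3]]]]]].
  destruct (r1q_props r0 qs Hr0) as [Hr1 [Hr01 HM]].
  set (x := pk qs a b) in *. set (r1 := r1q r0 qs) in *.
  destruct (nat_large (Rmax 1 ((1 + (1 + pC x) / pgm x) ^ 4))) as [N0 HN0].
  exists N0. intros N HN n HnN Hfar.
  specialize (HN0 N HN). pose proof (Rmax_l 1 ((1 + (1 + pC x) / pgm x) ^ 4)).
  pose proof (Rmax_r 1 ((1 + (1 + pC x) / pgm x) ^ 4)).
  assert (Hy : 1 <= INR N) by lra.
  assert (HN1 : (1 <= N)%nat) by (apply INR_le; simpl; lra).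
  assert (Ht : 0 <= INR n / INR N <= 1).
  { split. apply Rmult_le_pos. apply pos_INR. left; apply Rinv_0_lt_compat; lra.
    apply Rmult_le_reg_r with (INR N). lra. unfold Rdiv. rewrite Rmult_assoc, Rinv_l by lra.
    rewrite Rmult_1_r, Rmult_1_l. apply le_INR; auto. }
  apply (strong_real (INR N) (pK x) (pC x) (pgm x)); auto; try lra.
  eapply Rle_trans; [|apply (P3 _ (Rpower (INR N) (r1 - 1)))].
  + apply Rmult_le_compat_l; [lra|]. apply (eta_bound _ _ (Mb qs)); auto; lra.
  + exact Ht.
  + left; unfold Rpower; apply exp_pos.
  + intros r Hr. apply dist_conv; auto.
Qed.

Lemma strong_all qs r0 : HND qs -> 0 < r0 < 1 ->
  exists N0, forall a, (a < length qs)%nat -> forall N, (N0 <= N)%nat ->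
    forall b, (b < length qs)%nat -> a <> b -> Strong qs (r1q r0 qs) a b N.
Proof. intros Hnd Hr0. apply (unif (fun a N => forall b, (b < length qs)%nat -> a <> b -> Strong qs (r1q r0 qs) a b N)).
  intros a Ha.
  destruct (unif (fun b N => a <> b -> Strong qs (r1q r0 qs) a b N) (length qs)) as [N0 HN0].
  - intros b Hb. destruct (Nat.eq_dec a b). exists 0%nat; intros; contradiction.
    destruct (strong_pair qs r0 a b) as [N0 HN0]; auto. exists N0; auto.
  - exists N0. intros N HN b Hb Hab. apply HN0; auto.
Qed.

Lemma far qs r1 s s' N n : In (s, s') (Gaps qs) ->
  s * INR N + rpow N r1 < INR n < s' * INR N - rpow N r1 ->
  forall z, In z (Sp qs) -> rpow N r1 <= Rabs (INR n - z * INR N).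
Proof. intros Hg Hn z Hz. apply Gaps_iff in Hg as [_ [_ [_ Hno]]]. simpl in Hno.
  pose proof (pos_INR N).
  destruct (Rle_lt_dec z s) as [Hzs|Hzs].
  - rewrite Rabs_pos_eq. assert (z * INR N <= s * INR N) by (apply Rmult_le_compat_r; lra). lra.
    assert (z * INR N <= s * INR N) by (apply Rmult_le_compat_r; lra). pose proof (rpow_pos N r1). lra.
  - destruct (Rle_lt_dec s' z) as [Hzs'|Hzs'].
    + rewrite Rabs_left1. assert (s' * INR N <= z * INR N) by (apply Rmult_le_compat_r; lra). lra.
      assert (s' * INR N <= z * INR N) by (apply Rmult_le_compat_r; lra). pose proof (rpow_pos N r1). lra.
    + exfalso. apply (Hno z Hz). lra.
Qed.

Definition Good qs (g : R * R) (p : list nat) : Prop :=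
  forall i, (S i < length qs)%nat -> 0 < H (pe (pk qs (nth i p 0%nat) (nth (S i) p 0%nat))) ((fst g + snd g) / 2).

Definition eps qs (g : R * R) : list nat :=
  epsilon (inhabits nil) (fun p => is_perm (length qs) p /\ Good qs g p).

Lemma perm_facts l p : is_perm l p -> length p = l /\ NoDup p /\ forall i, (i < l)%nat -> (nth i p 0%nat < l)%nat.
Proof. intros Hp. unfold is_perm in Hp. assert (length p = l) by (rewrite <- (Permutation_length Hp), length_seq; auto).
  split; auto. split. apply (Permutation_NoDup Hp), seq_NoDup.
  intros i Hi. assert (In (nth i p 0%nat) (seq 0 l)). apply Permutation_in with p. apply Permutation_sym; auto.
  apply nth_In; lia. apply in_seq in H1. lia. Qed.

Lemma perm_neq l p i : is_perm l p -> (S i < l)%nat -> nth i p 0%nat <> nth (S i) p 0%nat.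
Proof. intros Hp Hi E. destruct (perm_facts l p Hp) as [Hl [Hn _]].
  apply (NoDup_nth p 0%nat) in E; auto; lia. Qed.

Lemma sign_pair qs a b s s' u v : HND qs -> (a < length qs)%nat -> (b < length qs)%nat -> a <> b ->
  In (s, s') (Gaps qs) -> s < u < s' -> s < v < s' ->
  0 < H (pe (pk qs a b)) u -> 0 < H (pe (pk qs a b)) v.
Proof. intros Hnd Ha Hb Hab Hg Hu Hv Hp.
  pose proof Hg as Hg'. apply Gaps_iff in Hg' as [Hs [Hs' [_ Hno]]]. simpl in *.
  apply (sign_const _ (Sp qs) s s' u); auto.
  - apply (Sp_01 qs s Hnd Hs).
  - apply (Sp_01 qs s' Hnd Hs').
  - intros t Ht Hz. destruct (pk_spec qs a b Hnd) as [_ Hok]. specialize (Hok Ha Hb Hab).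
    destruct Hok as [_ [_ [_ [_ [_ [P2 _]]]]]]. apply (Sp_roots qs a b); auto.
Qed.

Lemma good_exists qs r0 g : HND qs -> 0 < r0 < 1 -> In g (Gaps qs) -> exists p, is_perm (length qs) p /\ Good qs g p.
Proof. intros Hnd Hr0 Hg. destruct g as [s s'].
  pose proof Hg as Hg'. apply Gaps_iff in Hg' as [Hs [Hs' [Hlt Hno]]]. simpl in *.
  pose proof (Sp_01 qs s Hnd Hs). pose proof (Sp_01 qs s' Hnd Hs').
  destruct (r1q_props r0 qs Hr0) as [Hr1 _]. set (r1 := r1q r0 qs) in *.
  destruct (strong_all qs r0 Hnd Hr0) as [N0 HN0].
  destruct (large_Y (s' - s) r1) as [Y [HY1 HY]]; try lra.
  destruct (nat_large Y) as [N1 HN1].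
  set (N := Nat.max N0 N1).
  assert (HyY : Y <= INR N) by (apply HN1; lia).
  destruct (n_in_gap s s' (INR N) r1) as [n [HnN Hn]]; try lra. apply HY; auto.
  assert (HnN' : (n <= N)%nat) by (apply INR_le; auto).
  assert (Hfar : forall z, In z (Sp qs) -> rpow N r1 <= Rabs (INR n - z * INR N)) by (apply (far qs r1 s s'); auto).
  assert (Hsq : 0 < sqrt (INR N)) by (apply sqrt_lt_R0; lra).
  set (v := fun a => INR (beval (nth a qs nil) n N)).
  assert (HS : forall a b, (a < length qs)%nat -> (b < length qs)%nat -> a <> b ->
     (0 < H (pe (pk qs a b)) (INR n / INR N) -> sqrt (INR N) <= v b - v a) /\
     (H (pe (pk qs a b)) (INR n / INR N) <= 0 -> v b - v a <= - sqrt (INR N))).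
  { intros a b Ha Hb Hab. apply (HN0 a Ha N); auto. lia.
    intros r Hr. apply Hfar. apply (Sp_roots qs a b); auto. }
  destruct (sort_exists v (seq 0 (length qs))) as [p [Hp Hsort]].
  - apply seq_NoDup.
  - intros a b Ha Hb Hab. apply in_seq in Ha, Hb. destruct (HS a b) as [A1 A2]; try lia; auto.
    destruct (Rlt_le_dec 0 (H (pe (pk qs a b)) (INR n / INR N))) as [Hp|Hp].
    + specialize (A1 Hp). lra.
    + specialize (A2 Hp). lra.
  - exists p. split; auto. intros i Hi.
    assert (Hper : is_perm (length qs) p) by auto.
    destruct (perm_facts _ _ Hper) as [Hlp [_ Hlt']].
    pose proof (sorted_nth _ p Hsort i) as Hvi. rewrite Hlp in Hvi. specialize (Hvi Hi).
    set (a := nth i p 0%nat) in *. set (b := nth (S i) p 0%nat) in *.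
    assert (Ha : (a < length qs)%nat) by (apply Hlt'; lia).
    assert (Hb : (b < length qs)%nat) by (apply Hlt'; lia).
    assert (Hab : a <> b) by (apply (perm_neq (length qs)); auto).
    destruct (HS a b Ha Hb Hab) as [_ A2].
    assert (Hpos : 0 < H (pe (pk qs a b)) (INR n / INR N)).
    { destruct (Rlt_le_dec 0 (H (pe (pk qs a b)) (INR n / INR N))) as [Hp'|Hp']; auto.
      specialize (A2 Hp'). lra. }
    simpl. apply (sign_pair qs a b s s' (INR n / INR N)); auto; try lra.
    pose proof (rpow_pos N r1). unfold rpow in *.
    split.
    + apply Rmult_lt_reg_r with (INR N). lra. unfold Rdiv. rewrite Rmult_assoc, Rinv_l, Rmult_1_r by lra. lra.
    + apply Rmult_lt_reg_r with (INR N). lra. unfold Rdiv. rewrite Rmult_assoc, Rinv_l, Rmult_1_r by lra. lra.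
Qed.

Definition iv qs (p : list nat) : list (R * R) :=
  filter (fun g => if list_eq_dec Nat.eq_dec (eps qs g) p then true else false) (Gaps qs).

Definition Bs qs r0 N : list nat :=
  filter (fun n => if excluded_middle_informative
     (INR n <= rpow N r0 \/ exists s, In s (Sp qs) /\ Rabs (INR n - s * INR N) <= rpow N (r1q r0 qs))
     then true else false) (seq 1 N).

Definition window (y W s : R) : list nat :=
  seq (Z.to_nat (up (s * y - W) - 1)) (Z.to_nat (up (2 * W)) + 1).

Lemma INR_Zto z : (0 <= z)%Z -> INR (Z.to_nat z) = IZR z.
Proof. intros. rewrite INR_IZR_INZ, Z2Nat.id; auto. Qed.

Lemma window_in y W s n : 0 < W -> Rabs (INR n - s * y) <= W -> In n (window y W s).
Proof. intros HW Hn. apply Rabs_le_between in Hn. unfold window. apply in_seq.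
  destruct (archimed (s * y - W)) as [A1 A2]. destruct (archimed (2 * W)) as [B1 B2].
  assert (E1 : (up (s * y - W) - 1 <= Z.of_nat n)%Z).
  { apply le_IZR. rewrite minus_IZR, <- INR_IZR_INZ. lra. }
  assert (E2 : (Z.of_nat n - (up (s * y - W) - 1) < up (2 * W) + 1)%Z).
  { apply lt_IZR. rewrite minus_IZR, minus_IZR, plus_IZR, <- INR_IZR_INZ. lra. }
  assert (E3 : (0 < up (2 * W))%Z) by (apply lt_IZR; lra).
  lia. Qed.

Lemma length_flat_map_const {A B : Type} (f : A -> list B) k l :
  (forall x, length (f x) = k) -> length (flat_map f l) = (length l * k)%nat.
Proof. intros Hf. induction l; simpl; auto. rewrite length_app, Hf, IHl. lia. Qed.

Lemma rpow_ge1 N r : (1 <= N)%nat -> 0 <= r -> 1 <= rpow N r.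
Proof. intros HN Hr. unfold rpow. assert (1 <= INR N) by (apply (le_INR 1); auto).
  rewrite <- (Rpower_O (INR N)) by lra. apply Rle_Rpower; auto. Qed.

Lemma rpow_mono N r r' : (1 <= N)%nat -> r <= r' -> rpow N r <= rpow N r'.
Proof. intros HN Hr. unfold rpow. assert (1 <= INR N) by (apply (le_INR 1); auto).
  apply Rle_Rpower; auto. Qed.

Lemma Bs_length qs r0 N : 0 < r0 < 1 -> (1 <= N)%nat ->
  INR (length (Bs qs r0 N)) <= (2 + 4 * INR (length (Sp qs))) * rpow N (r1q r0 qs).
Proof. intros Hr0 HN. destruct (r1q_props r0 qs Hr0) as [Hr1 [Hr01 _]].
  set (r1 := r1q r0 qs) in *. set (W := rpow N r1). set (y := INR N).
  assert (HW : 1 <= W) by (apply rpow_ge1; auto; lra).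
  assert (HW0 : rpow N r0 <= W) by (apply rpow_mono; auto).
  pose proof (rpow_pos N r0).
  set (M0 := Z.to_nat (up (rpow N r0))).
  set (Cov := seq 1 M0 ++ flat_map (window y W) (Sp qs)).
  assert (Hinc : incl (Bs qs r0 N) Cov).
  { intros n Hn. unfold Bs in Hn. apply filter_In in Hn as [Hn Hc].
    destruct (excluded_middle_informative _) as [[Hc'|[s [Hs Hc']]]|]; [| |discriminate].
    - apply in_or_app; left. apply in_seq in Hn. apply in_seq. split. lia.
      destruct (archimed (rpow N r0)) as [A1 A2].
      assert (Z.of_nat n < up (rpow N r0))%Z by (apply lt_IZR; rewrite <- INR_IZR_INZ; lra).
      unfold M0. lia.
    - apply in_or_app; right. apply in_flat_map. exists s. split; auto. apply window_in; auto. lra. }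
  apply NoDup_incl_length in Hinc; [|apply NoDup_filter, seq_NoDup].
  apply le_INR in Hinc. eapply Rle_trans; [apply Hinc|].
  unfold Cov. rewrite length_app, length_seq, (length_flat_map_const _ (Z.to_nat (up (2 * W)) + 1)).
  2:{ intros; unfold window; apply length_seq. }
  rewrite plus_INR, mult_INR, plus_INR.
  destruct (archimed (rpow N r0)) as [A1 A2]. destruct (archimed (2 * W)) as [B1 B2].
  unfold M0. rewrite !INR_Zto by (apply le_IZR; lra). simpl (INR 1).
  pose proof (pos_INR (length (Sp qs))).
  assert (INR (length (Sp qs)) * (IZR (up (2 * W)) + 1) <= INR (length (Sp qs)) * (4 * W))
    by (apply Rmult_le_compat_l; lra).
  lra.
Qed.

Lemma eps_spec qs r0 g : HND qs -> 0 < r0 < 1 -> In g (Gaps qs) -> is_perm (length qs) (eps qs g) /\ Good qs g (eps qs g).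
Proof. intros. unfold eps. apply epsilon_spec. apply (good_exists qs r0); auto. Qed.

Lemma iv_in qs p g : In g (iv qs p) <-> In g (Gaps qs) /\ eps qs g = p.
Proof. unfold iv. rewrite filter_In. destruct (list_eq_dec Nat.eq_dec (eps qs g) p) as [E|E]; split; intros Hx; try tauto.
  destruct Hx as [_ Hf]; discriminate. Qed.

Lemma inI_gap qs p r1 N n : (1 <= N)%nat -> inI (iv qs p) 1 r1 N n ->
  exists s s', In (s, s') (iv qs p) /\ s * INR N + rpow N r1 < INR n < s' * INR N - rpow N r1 /\
     s < INR n / INR N < s'.
Proof. intros HN [[s s'] [Hin Hb]]. simpl in Hb. exists s, s'. split; auto.
  assert (1 <= INR N) by (apply (le_INR 1); auto). pose proof (rpow_pos N r1).
  split. lra. split.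
  - apply Rmult_lt_reg_r with (INR N). lra. unfold Rdiv. rewrite Rmult_assoc, Rinv_l, Rmult_1_r by lra. lra.
  - apply Rmult_lt_reg_r with (INR N). lra. unfold Rdiv. rewrite Rmult_assoc, Rinv_l, Rmult_1_r by lra. lra.
Qed.
Theorem mainTheorem12 (qs : list bpoly) (r0 : R) :
  (* standing assumptions on q_1, ..., q_l (0-indexed: q_i = nth i qs []) *)
  (forall i, (i < length qs)%nat -> ~ depends_only_on_N (nth i qs nil)) ->
  (forall i, (S i < length qs)%nat -> (bdeg (nth i qs nil) <= bdeg (nth (S i) qs nil))%nat) ->
  (forall i j, (i < length qs)%nat -> (j < length qs)%nat -> i <> j ->
      ~ diff_constant (nth i qs nil) (nth j qs nil)) ->
  (forall i, (i < length qs)%nat -> bdeg (nth i qs nil) = 1%nat ->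
      bcoef (nth i qs nil) 0 0 = 0%nat) ->
  (* hypothesis on r0 *)
  0 < r0 < 1 ->
  (forall i j, (i < length qs)%nat -> (j < length qs)%nat ->
      (bdeg (nth j qs nil) < bdeg (nth i qs nil))%nat ->
      exists N0 : nat, forall N n m : nat, (N0 <= N)%nat ->
        rpow N r0 <= INR n -> (n <= N)%nat ->
        rpow N r0 <= INR m -> (m <= N)%nat ->
        INR (beval (nth i qs nil) n N) - INR (beval (nth j qs nil) m N) >= INR N) ->
  exists (r1 c A B : R) (Bs : nat -> list nat) (iv : list nat -> list (R * R)),
    0 < r1 < 1 /\ 0 < c /\ 0 < A /\ 0 < B /\
    (* the exceptional sets B_N *)
    (forall N : nat, (1 <= N)%nat ->
       NoDup (Bs N) /\
       INR (length (Bs N)) <= A * rpow N r1 /\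
       (forall n : nat, (1 <= n)%nat -> INR n <= rpow N r0 -> In n (Bs N))) /\
    (* the intervals (a_{j,eps}, b_{j,eps}) *)
    (forall p, is_perm (length qs) p ->
       forall ab, In ab (iv p) -> 0 <= fst ab < snd ab /\ snd ab <= 1) /\
    (forall p p' j j', is_perm (length qs) p -> is_perm (length qs) p' ->
       (j < length (iv p))%nat -> (j' < length (iv p'))%nat ->
       (p, j) <> (p', j') ->
       forall x : R,
         ~ (fst (nth j (iv p) (0, 0)) < x < snd (nth j (iv p) (0, 0)) /\
            fst (nth j' (iv p') (0, 0)) < x < snd (nth j' (iv p') (0, 0)))) /\
    (* the sets I_eps(N) are pairwise disjoint and cover [1,N] \ B_N *)
    (forall N : nat, (1 <= N)%nat ->
       (forall p p' n, is_perm (length qs) p -> is_perm (length qs) p' -> p <> p' ->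
          ~ (inI (iv p) B r1 N n /\ inI (iv p') B r1 N n)) /\
       (forall n : nat, (1 <= n <= N)%nat -> ~ In n (Bs N) ->
          exists p, is_perm (length qs) p /\ inI (iv p) B r1 N n)) /\
    (* ordering of the q's on I_eps(N) *)
    (exists N0 : nat, forall N : nat, (N0 <= N)%nat ->
       forall p n, is_perm (length qs) p -> inI (iv p) B r1 N n -> rpow N r0 <= INR n ->
       forall i, (S i < length qs)%nat ->
         let qa := nth (nth i p 0%nat) qs nil in
         let qb := nth (nth (S i) p 0%nat) qs nil in
         (beval qa n N < beval qb n N)%nat /\
         (bdeg qa = bdeg qb -> (1 < bdeg qa)%nat ->
            INR (beval qb n N) >= INR (beval qa n N) + c * sqrt (INR N))).
Proof.
  intros Hdep Hdeg Hnd0 Hlin Hr0 Hdom.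
  assert (Hnd : HND qs) by exact Hnd0.
  destruct (r1q_props r0 qs Hr0) as [Hr1 [Hr01 _]].
  exists (r1q r0 qs), 1, (2 + 4 * INR (length (Sp qs))), 1, (Bs qs r0), (iv qs).
  set (r1 := r1q r0 qs) in *.
  pose proof (pos_INR (length (Sp qs))).
  split; [auto|]. split; [lra|]. split; [lra|]. split; [lra|].
  split; [|split; [|split; [|split]]].
  -
    intros N HN. split; [|split].
    + apply NoDup_filter, seq_NoDup.
    + apply Bs_length; auto.
    + intros n Hn1 Hn. unfold Bs. apply filter_In. split.
      * apply in_seq. split. lia.
        assert (rpow N r0 <= INR N).
        { unfold rpow. rewrite <- (Rpower_1 (INR N)) at 2 by (apply lt_0_INR; lia).
          apply Rle_Rpower. apply (le_INR 1); auto. lra. }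
        assert (n <= N)%nat by (apply INR_le; lra). lia.
      * destruct (excluded_middle_informative _) as [|Hno]; auto.
  -
    intros p Hp ab Hab. apply iv_in in Hab as [Hg _]. destruct ab as [s s'].
    pose proof Hg as Hg'. apply Gaps_iff in Hg' as [Hs [Hs' [Hlt _]]]. simpl in *.
    pose proof (Sp_01 qs s Hnd Hs). pose proof (Sp_01 qs s' Hnd Hs'). lra.
  -
    intros p p' j j' Hp Hp' Hj Hj' Hne x [Hx1 Hx2].
    pose proof (nth_In (iv qs p) (0, 0) Hj) as Hin. pose proof (nth_In (iv qs p') (0, 0) Hj') as Hin'.
    remember (nth j (iv qs p) (0, 0)) as g eqn:Eg. remember (nth j' (iv qs p') (0, 0)) as g' eqn:Eg'.
    apply iv_in in Hin as [Hg Hep]. apply iv_in in Hin' as [Hg' Hep'].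
    assert (Hgg : g = g').
    { pose proof Hg as G1. pose proof Hg' as G2. apply Gaps_iff in G1 as [A1 [A2 [_ N1]]]. apply Gaps_iff in G2 as [A3 [A4 [_ N2]]].
      destruct (gap_disj (Sp qs) (fst g) (snd g) (fst g') (snd g') x) as [E1 E2]; auto.
      rewrite (surjective_pairing g), (surjective_pairing g'), E1, E2; reflexivity. }
    assert (Hpp : p = p') by (rewrite <- Hep, <- Hep', Hgg; auto). rewrite <- Hpp in Hne, Eg'.
    assert (j <> j') by (intros E; apply Hne; rewrite E; reflexivity).
    assert (Hnd' : NoDup (iv qs p)) by (apply NoDup_filter, NoDup_nodup).
    apply (proj1 (NoDup_nth (iv qs p) (0, 0))) with (i := j) (j := j') in Hnd'; auto.
    all: try (rewrite Hpp; auto). all: try congruence.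
  - intros N HN. split.
    + intros p p' n Hp Hp' Hne [H1 H2].
      destruct (inI_gap qs p r1 N n HN H1) as [s1 [s1' [Hi1 [_ Hx1]]]].
      destruct (inI_gap qs p' r1 N n HN H2) as [s2 [s2' [Hi2 [_ Hx2]]]].
      apply iv_in in Hi1 as [Hg1 Hep1]. apply iv_in in Hi2 as [Hg2 Hep2].
      pose proof Hg1 as G1. pose proof Hg2 as G2. apply Gaps_iff in G1 as [A1 [A2 [_ N1]]]. apply Gaps_iff in G2 as [A3 [A4 [_ N2]]].
      simpl in *. destruct (gap_disj (Sp qs) s1 s1' s2 s2' (INR n / INR N)) as [E1 E2]; auto. subst.
      apply Hne. congruence.
    + intros n Hn HnB.
      assert (Hy : 1 <= INR N) by (apply (le_INR 1); auto).
      assert (HW : 1 <= rpow N r1) by (apply rpow_ge1; auto; lra).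
      assert (Hfar : forall s, In s (Sp qs) -> rpow N r1 < Rabs (INR n - s * INR N)).
      { intros s Hs. apply Rnot_le_lt. intros Hle. apply HnB. unfold Bs. apply filter_In. split.
        apply in_seq; lia. destruct (excluded_middle_informative _) as [|Hno]; auto. exfalso; apply Hno. right; eauto. }
      assert (Hn1 : 1 <= INR n) by (apply (le_INR 1); lia).
      assert (HnN : INR n <= INR N) by (apply le_INR; lia).
      destruct (max_in (Sp qs) (fun z => z * INR N < INR n)) as [m [Hm [Pm Hmax]]].
      { exists 0. split. apply Sp_0. lra. }
      destruct (min_in (Sp qs) (fun z => INR n < z * INR N)) as [m' [Hm' [Pm' Hmin]]].
      { exists 1. split. apply Sp_1. specialize (Hfar 1 (Sp_1 qs)).
        rewrite Rmult_1_l in *. rewrite Rabs_left1 in Hfar; lra. }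
      assert (Hgap : In (m, m') (Gaps qs)).
      { apply Gaps_iff. simpl. split; auto. split; auto. split; simpl.
        - apply Rmult_lt_reg_r with (INR N). lra. lra.
        - intros z Hz Hb. pose proof (Hfar z Hz) as Hfz.
          destruct (Rlt_le_dec (z * INR N) (INR n)) as [Hl|Hl].
          + specialize (Hmax z Hz Hl). lra.
          + destruct (Rle_lt_or_eq_dec _ _ Hl) as [Hl'|Hl'].
            * specialize (Hmin z Hz Hl'). lra.
            * rewrite Hl', Rminus_diag, Rabs_R0 in Hfz. lra. }
      exists (eps qs (m, m')). split.
      * apply (eps_spec qs r0); auto.
      * exists (m, m'). split. apply iv_in; auto. simpl.
        pose proof (Hfar m Hm) as F1. pose proof (Hfar m' Hm') as F2.
        rewrite Rabs_pos_eq in F1 by lra. rewrite Rabs_left1 in F2 by lra. lra.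
  -
    destruct (strong_all qs r0 Hnd Hr0) as [N0 HN0].
    exists (Nat.max N0 1). intros N HN p n Hp HnI _ i Hi qa qb.
    assert (HN1 : (1 <= N)%nat) by lia.
    destruct (inI_gap qs p r1 N n HN1 HnI) as [s [s' [Hin [Hb Hx]]]].
    apply iv_in in Hin as [Hg Hep].
    destruct (eps_spec qs r0 (s, s') Hnd Hr0 Hg) as [_ Hgood]. rewrite Hep in Hgood.
    specialize (Hgood i Hi). simpl in Hgood.
    destruct (perm_facts _ _ Hp) as [Hlp [_ Hlt']].
    set (a := nth i p 0%nat) in *. set (b := nth (S i) p 0%nat) in *.
    assert (Ha : (a < length qs)%nat) by (apply Hlt'; lia).
    assert (Hb' : (b < length qs)%nat) by (apply Hlt'; lia).
    assert (Hab : a <> b) by (apply (perm_neq (length qs)); auto).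
    pose proof Hg as G. apply Gaps_iff in G as [Hs [Hs' [Hlt _]]]. simpl in *.
    pose proof (Sp_01 qs s Hnd Hs). pose proof (Sp_01 qs s' Hnd Hs').
    assert (Hpos : 0 < H (pe (pk qs a b)) (INR n / INR N)).
    { apply (sign_pair qs a b s s' ((s + s') / 2)); auto; lra. }
    assert (Hy : 1 <= INR N) by (apply (le_INR 1); auto).
    assert (HnN : (n <= N)%nat).
    { apply INR_le. pose proof (rpow_pos N r1). assert (s' * INR N <= INR N) by nra. lra. }
    destruct (HN0 a Ha N ltac:(lia) b Hb' Hab n HnN) as [A1 _].
    { intros r Hr. apply (far qs r1 s s'); auto. apply (Sp_roots qs a b); auto. }
    specialize (A1 Hpos).
    assert (Hsq : 0 < sqrt (INR N)) by (apply sqrt_lt_R0; lra).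
    subst qa qb. split.
    + apply INR_lt. lra.
    + intros _ _. lra.
Qed.
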